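(* For all $n,k \in \mathbb{N}$ with $n \geq k$, the integer $k!\,c_{n,k}$ is a multiple of $q_{n,k}$ (equivalently, $c_{n,k}$ is a multiple of the rational number $q_{n,k}/k!$, i.e. $c_{n,k}k!/q_{n,k} \in \mathbb{Z}$).
   Context: For $n \in \mathbb{N}$, $E_n$ denotes the set of polynomials $P \in \mathbb{C}[X]$ of degree $\leq n$ (including the zero polynomial) such that $P(\mathbb{Z}) \subset \mathbb{Z}$. For $n,k \in \mathbb{N}$, $c_{n,k}$ is the smallest positive integer such that $c_{n,k} P^{(k)} \in E_n$ for every $P \in E_n$, where $P^{(k)}$ is the $k$-th derivative. For $n,k \in \mathbb{N}$ with $n \geq k$, $$q_{n,k} = \mathrm{lcm}\{i_1 i_2 \cdots i_k : i_1,\dots,i_k \in \mathbb{N}^*,\ i_1+\dots+i_k \leq n\},$$ with the convention $q_{n,0} = 1$; $\mathbb{N}^*$ denotes the positive integers. *)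

(* Defs.v *)
From HB Require Import structures.
From mathcomp Require Import all_boot all_order all_algebra all_field.
Set Implicit Arguments. Unset Strict Implicit. Unset Printing Implicit Defensive.
Import Order.TTheory GRing.Theory Num.Theory.
Local Open Scope ring_scope.

(* E_n : polynomials of degree <= n (zero polynomial included) mapping Z into Z *)
Definition inE (n : nat) (P : {poly algC}) : Prop :=
  (size P <= n.+1)%N /\ forall z : int, P.[z%:~R] \is a Num.int.

Definition c_adm (n k c : nat) : Prop :=
  forall P : {poly algC}, inE n P -> inE n (c%:R *: P^`(k)).

Definition is_c (n k c : nat) : Prop :=
  (0 < c)%N /\ c_adm n k c /\ forall c', (0 < c')%N -> c_adm n k c' -> (c <= c')%N.

(* q_{n,k} = lcm { i_1 ... i_k : i_j >= 1, i_1 + ... + i_k <= n }; q_{n,0} = 1 *)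
Definition q (n k : nat) : nat :=
  \big[lcmn/1%N]_(t : k.-tuple 'I_n.+1 |
        all (fun i : 'I_n.+1 => (0 < i)%N) t && (\sum_(i <- t) (i : nat) <= n)%N)
     \prod_(i <- t) (i : nat).

(* Main.v *)
From HB Require Import structures.
From mathcomp Require Import all_boot all_order all_algebra all_field.
From mathcomp Require Import zify ring.
Require Import Defs.
Set Implicit Arguments. Unset Strict Implicit. Unset Printing Implicit Defensive.
Import Order.TTheory GRing.Theory Num.Theory.
Local Open Scope ring_scope.

Definition B (i : nat) : {poly algC} :=
  ((i`!)%:R)^-1 *: \prod_(j < i) ('X + (j : nat)%:R%:P).
Definition h (i : nat) : {poly algC} :=
  ((i`!)%:R)^-1 *: \prod_(j < i.-1) ('X + (j.+1)%:R%:P).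

Lemma fact_neq0 i : ((i`!)%:R : algC) != 0.
Proof. by rewrite pnatr_eq0 -lt0n fact_gt0. Qed.

Lemma B_Xh i : (0 < i)%N -> B i = 'X * h i.
Proof.
case: i => // i _; rewrite /B /h big_ord_recl /= addr0 -scalerAr; congr (_ *: _).
Qed.

Lemma h0 i : (0 < i)%N -> (h i).[0] = (i%:R)^-1.
Proof.
case: i => // i _; rewrite /h hornerZ horner_prod /=.
rewrite (eq_bigr (fun j : 'I_i => (j.+1)%:R)); last first.
  by move=> j _; rewrite hornerD hornerX hornerC add0r.
rewrite -natr_prod.
have -> : (\prod_(j < i) (j.+1)%N) = i`!.
  by elim: i => [|i IH]; rewrite ?big_ord0 // big_ord_recr /= IH factS mulnC.
rewrite factS natrM invfM -mulrA mulVf ?mulr1 //.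
exact: fact_neq0.
Qed.

Lemma size_B i : (size (B i) <= i.+1)%N.
Proof.
rewrite /B; apply: leq_trans (size_scale_leq _ _) _.
elim: i => [|i IH]; first by rewrite big_ord0 size_poly1.
rewrite big_ord_recr /=; apply: leq_trans (size_polyMleq _ _) _.
by rewrite size_XaddC addn2 /= ltnS.
Qed.

Lemma fact_dvd_prod (z : int) (i : nat) :
  ((i`!)%:Z %| \prod_(j < i) (z + (j : nat)%:Z))%Z.
Proof.
rewrite dvdzE (big_morph absz abszM (erefl _)) /=.
case: z => [w|m].
- case: i => [|i]; first by rewrite big_ord0.
  rewrite (reindex_inj rev_ord_inj) /=.
  rewrite (eq_bigr (fun j : 'I_i.+1 => (w + i) - j)%N); last first.
    move=> j _; rewrite /= subSS; have := ltn_ord j; lia.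
  by rewrite -ffact_prod -bin_ffact dvdn_mull.
- case: (leqP i m.+1) => him.
  + rewrite (eq_bigr (fun j : 'I_i => m.+1 - j)%N); last first.
      move=> j _; have := ltn_ord j; rewrite NegzE; lia.
    by rewrite -ffact_prod -bin_ffact dvdn_mull.
  + rewrite (bigD1 (Ordinal him)) //= NegzE.
    have -> : `|(- (Posz m.+1) + Posz m.+1)%R|%N = 0%N by rewrite addNr.
    by rewrite mul0n dvdn0.
Qed.

Lemma B_int i (z : int) : (B i).[z%:~R] \is a Num.int.
Proof.
rewrite /B hornerZ horner_prod.
rewrite (eq_bigr (fun j : 'I_i => (z + (j : nat)%:Z)%:~R)); last first.
  by move=> j _; rewrite hornerD hornerX hornerC intrD.
have e1 : ((1 : int)%:~R : algC) = 1 by [].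
rewrite -(big_morph (fun x : int => (x%:~R : algC)) (@intrM _) e1).
rewrite -(divzK (fact_dvd_prod z i)) intrM mulrC -mulrA.
have -> : ((i`!)%:Z%:~R : algC) = (i`!)%:R by [].
by rewrite mulfV ?fact_neq0 // mulr1 intr_int.
Qed.

Lemma prod_Xh (s : seq nat) : all (fun i => 0 < i)%N s ->
  \prod_(i <- s) B i = 'X^(size s) * \prod_(i <- s) h i.
Proof.
elim: s => [|a s IH] /=; first by rewrite !big_nil expr0 mulr1.
move/andP=> [ha hs]; rewrite !big_cons IH // B_Xh // exprS; exact: mulrACA.
Qed.

Lemma size_P (s : seq nat) : (size (\prod_(i <- s) B i)%R <= (\sum_(i <- s) i).+1)%N.
Proof.
elim: s => [|a s IH]; first by rewrite !big_nil size_poly1.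
rewrite !big_cons; apply: leq_trans (size_polyMleq _ _) _.
have := size_B a; lia.
Qed.

Lemma prod_gt0 (s : seq nat) : all (fun i => 0 < i)%N s -> (0 < \prod_(i <- s) i)%N.
Proof.
elim: s => [|a s IH] /=; first by rewrite big_nil.
by move/andP=> [ha hs]; rewrite big_cons muln_gt0 ha IH.
Qed.

Lemma core n k c (s : seq nat) : c_adm n k c -> size s = k ->
  all (fun i => 0 < i)%N s -> (\sum_(i <- s) i <= n)%N ->
  (\prod_(i <- s) i %| k`! * c)%N.
Proof.
move=> hc hs hpos hsum.
pose P := \prod_(i <- s) B i.
have hP : inE n P.
  split; first exact: leq_trans (size_P s) _.
  by move=> z; rewrite /P horner_prod; apply: rpred_prod => i _; exact: B_int.
have [_ /(_ 0)] := hc P hP.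
rewrite hornerZ horner_coef0 coef_derivn addn0 ffactnn /P prod_Xh // hs coefXnM ltnn subnn.
rewrite -horner_coef0 horner_prod.
rewrite (eq_big_seq (fun i => (i%:R)^-1)); last first.
  by move=> i his; apply: h0; exact: (allP hpos).
rewrite prodfV -natr_prod => H.
set D := (\prod_(i <- s) i)%N in H *.
have hD : (0 < D)%N by exact: prod_gt0.
have /natrP [N hN] : (c%:R * ((D%:R)^-1 *+ k`!) : algC) \is a Num.nat.
  by rewrite natrEint H /= mulr_ge0 ?mulrn_wge0 ?invr_ge0 ?ler0n.
have e : ((k`! * c)%N%:R : algC) = (N * D)%N%:R.
  rewrite !natrM -hN -mulr_natr; field.
  by rewrite pnatr_eq0 -lt0n.
move/eqP: e; rewrite eqr_nat => /eqP ->.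
exact: dvdn_mull.
Qed.

Local Close Scope ring_scope.
Theorem theorem3 (n k c : nat) : (k <= n)%N -> is_c n k c -> q n k %| k`! * c.
Proof.
move=> _ [_ [hc _]].
apply/dvdn_biglcmP => t /andP [hpos hsum].
rewrite -(big_map val xpredT (fun i => i)).
apply: (core hc); first by rewrite size_map size_tuple.
  by rewrite all_map.
by rewrite big_map.
Qed.
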